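(* Let $d\ge 5$. If every configuration in $Q^3_{d-1}$ of type $\varphi_1$, $\varphi_2$, $\varphi_3$ or $\varphi_4$ (with dimension $d-1$) is covered, then every configuration in $Q^3_d$ of type $t_1(d)$, $t_2(d)$, $t_3(d)$, $t_4(d)$ or $t_5(d)$ is covered.
   Context: For $n\in\mathbb{N}_0$, $Q^3_n$ is the $3$-uniform hypergraph on $V_n=\{0,1,2\}^n$ whose edges are the triples of pairwise distinct sequences agreeing in $n-1$ coordinates. A loose path from $v_0$ to $v_{2\ell}$ consists of distinct vertices $v_0,\dots,v_{2\ell}$ and distinct edges $e_i=\{v_{2i-2},v_{2i-1},v_{2i}\}$, $i=1,\dots,\ell$. A configuration in $Q^3_n$ is an ordered $4$-tuple $(a,b,x,y)$ of pairwise distinct vertices of $V_n$; it is covered if there is a loose path in $Q^3_n$ from $a$ to $b$ whose vertex set is exactly $V_n\setminus\{x,y\}$. For $v\in V_n$ write $v_i$ for its $i$-th coordinate and $v_{[k]}=(v_1,\dots,v_k)$. A symmetry is a bijection of $V_n$ obtained by permuting the coordinates and, independently in each coordinate, permuting the values $\{0,1,2\}$. A configuration $c=(a,b,x,y)$ in $Q^3_n$ is of a given type if, after applying some symmetry to all four vertices and possibly interchanging $x$ and $y$, the resulting configuration (still denoted $(a,b,x,y)$) satisfies (with $n$ the dimension): $t_1(n)$: $a_n=x_n=0$, $b_n=1$, $y_n=2$, and $a_{[n-1]}\notin\{b_{[n-1]},x_{[n-1]},y_{[n-1]}\}$; $t_2(n)$: $a_n=b_n=0$, $x_n=1$, $y_n=2$,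 and $a_{[n-1]}\notin\{b_{[n-1]},x_{[n-1]},y_{[n-1]}\}$; $t_3(n)$: $a_n=x_n=0$ and $b_n=y_n=1$; $t_4(n)$: $a_n=0$, $b_n=x_n=1$, $y_n=2$, and $b_{[n-1]}\notin\{a_{[n-1]},x_{[n-1]},y_{[n-1]}\}$; $t_5(n)$: $a_n=b_n=0$, $x_n=1$, $y_n=2$, and $b_{[n-1]}\notin\{a_{[n-1]},x_{[n-1]},y_{[n-1]}\}$; $\varphi_1$: the $t_1(n)$ conditions hold and there is $i\in[n-1]$ with $b_i\in\{a_i,x_i,y_i\}$; $\varphi_2$: the $t_2(n)$ or the $t_5(n)$ conditions hold and there are two distinct $i,i'\in[n-1]$, $u\in\{a,b\}$, $w\in\{x,y\}$ with $u_i=w_i$ and $u_{i'}=w_{i'}$; $\varphi_3$: the $t_3(n)$ conditions hold and there is $i\in[n-1]$ with $a_i=y_i$ or $b_i=x_i$; $\varphi_4$: the $t_4(n)$ conditions hold and there is $i\in[n-1]$ with $a_i\in\{b_i,x_i,y_i\}$. *)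

(* Defs.v *)
From HB Require Import structures.
From mathcomp Require Import all_boot fingroup perm.
Set Implicit Arguments. Unset Strict Implicit. Unset Printing Implicit Defensive.

(* Vertices of Q^3_m : sequences in {0,1,2}^m, coordinates indexed by 'I_m
   (paper's coordinate i in [m] is our index i-1). *)
Definition V (m : nat) := {ffun 'I_m -> 'I_3}.

Definition c0 : 'I_3 := @Ordinal 3 0 isT.
Definition c1 : 'I_3 := @Ordinal 3 1 isT.
Definition c2 : 'I_3 := @Ordinal 3 2 isT.

Definition is_edge (m : nat) (u v w : V m) : Prop :=
  [/\ u != v, v != w, u != w &
      exists i : 'I_m, forall j : 'I_m, j != i -> u j = v j /\ v j = w j].

Definition path_edge (m : nat) (d : V m) (s : seq (V m)) (i : nat) : {set V m} :=
  [set nth d s (2 * i); nth d s (2 * i).+1; nth d s (2 * i).+2].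

Definition loose_path (m : nat) (a b : V m) (s : seq (V m)) : Prop :=
  [/\ odd (size s), nth a s 0 = a, last a s = b & uniq s] /\
  [/\ (forall i, i < (size s)./2 ->
         is_edge (nth a s (2 * i)) (nth a s (2 * i).+1) (nth a s (2 * i).+2)) &
      (forall i j, i < j -> j < (size s)./2 -> path_edge a s i != path_edge a s j)].

Definition config (m : nat) (a b x y : V m) : Prop :=
  [/\ a != b, a != x & a != y] /\ [/\ b != x, b != y & x != y].

Definition covered (m : nat) (a b x y : V m) : Prop :=
  exists s : seq (V m), loose_path a b s /\
    (forall v : V m, v \in s = (v != x) && (v != y)).

Definition sym (m : nat) (sg : {perm 'I_m}) (p : {ffun 'I_m -> {perm 'I_3}})
  (v : V m) : V m := [ffun i => p i (v (sg i))].

Definition of_type (m : nat) (P : V m -> V m -> V m -> V m -> Prop)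
  (a b x y : V m) : Prop :=
  exists (sg : {perm 'I_m}) (p : {ffun 'I_m -> {perm 'I_3}}),
    let g := sym sg p in
    P (g a) (g b) (g x) (g y) \/ P (g a) (g b) (g y) (g x).

(* Conditions in dimension m.+1 (the paper's n = m+1): the last coordinate is
   ord_max, and v_{[n-1]} is the restriction to the first m coordinates. *)
Definition lst (m : nat) (v : V m.+1) : 'I_3 := v ord_max.
Definition pre (m : nat) (v : V m.+1) : V m :=
  [ffun i : 'I_m => v (widen_ord (leqnSn m) i)].
Definition co (m : nat) (v : V m.+1) (i : 'I_m) : 'I_3 :=
  v (widen_ord (leqnSn m) i).

Definition t1 (m : nat) (a b x y : V m.+1) : Prop :=
  [/\ lst a = c0, lst x = c0, lst b = c1, lst y = c2 &
      pre a \notin [:: pre b; pre x; pre y]].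
Definition t2 (m : nat) (a b x y : V m.+1) : Prop :=
  [/\ lst a = c0, lst b = c0, lst x = c1, lst y = c2 &
      pre a \notin [:: pre b; pre x; pre y]].
Definition t3 (m : nat) (a b x y : V m.+1) : Prop :=
  [/\ lst a = c0, lst x = c0, lst b = c1 & lst y = c1].
Definition t4 (m : nat) (a b x y : V m.+1) : Prop :=
  [/\ lst a = c0, lst b = c1, lst x = c1, lst y = c2 &
      pre b \notin [:: pre a; pre x; pre y]].
Definition t5 (m : nat) (a b x y : V m.+1) : Prop :=
  [/\ lst a = c0, lst b = c0, lst x = c1, lst y = c2 &
      pre b \notin [:: pre a; pre x; pre y]].

Definition phi1 (m : nat) (a b x y : V m.+1) : Prop :=
  t1 a b x y /\ exists i : 'I_m, co b i \in [:: co a i; co x i; co y i].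
Definition phi2 (m : nat) (a b x y : V m.+1) : Prop :=
  (t2 a b x y \/ t5 a b x y) /\
  exists (i i' : 'I_m) (u w : V m.+1),
    [/\ i != i', u \in [:: a; b], w \in [:: x; y],
        co u i = co w i & co u i' = co w i'].
Definition phi3 (m : nat) (a b x y : V m.+1) : Prop :=
  t3 a b x y /\ exists i : 'I_m, co a i = co y i \/ co b i = co x i.
Definition phi4 (m : nat) (a b x y : V m.+1) : Prop :=
  t4 a b x y /\ exists i : 'I_m, co a i \in [:: co b i; co x i; co y i].

(* Main.v *)
Require Import Defs.
From HB Require Import structures.
From mathcomp Require Import all_boot fingroup perm zify.
Set Implicit Arguments. Unset Strict Implicit. Unset Printing Implicit Defensive.

Section Pat.
Variables (I T : eqType) (cs : seq I).
Notation vt := (I -> T).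
Definition dif3 (u v w : T) := [&& u != v, v != w & u != w].
Definition neo (j : I) (u w : vt) := has (fun k => (k != j) && (u k != w k)) cs.
Definition dff (u w : vt) := has (fun k => u k != w k) cs.
Definition agr (u w : vt) (i i' : I) := (u i == w i) && (u i' == w i').
Definition p1j (A B X Y : vt) j := [&& A j == X j, dif3 (A j) (B j) (Y j), neo j A B, neo j A X, neo j A Y &
   has (fun i => (i != j) && [|| B i == A i, B i == X i | B i == Y i]) cs].
Definition p1 A B X Y := has (fun j => p1j A B X Y j || p1j A B Y X j) cs.
Definition p2j (A B X Y : vt) j := [&& A j == B j, dif3 (A j) (X j) (Y j),
   (neo j A B && neo j A X && neo j A Y) || (neo j B A && neo j B X && neo j B Y) &
   has (fun i => has (fun i' => [&& i != j, i' != j, i != i' &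
       [|| agr A X i i', agr A Y i i', agr B X i i' | agr B Y i i']]) cs) cs].
Definition p2 A B X Y := has (p2j A B X Y) cs.
Definition p3j (A B X Y : vt) j := [&& A j == X j, B j == Y j, A j != B j &
   has (fun i => (i != j) && ((A i == Y i) || (B i == X i))) cs].
Definition p3 A B X Y := has (fun j => p3j A B X Y j || p3j A B Y X j) cs.
Definition p4j (A B X Y : vt) j := [&& B j == X j, dif3 (A j) (B j) (Y j), neo j B A, neo j B X, neo j B Y &
   has (fun i => (i != j) && [|| A i == B i, A i == X i | A i == Y i]) cs].
Definition p4 A B X Y := has (fun j => p4j A B X Y j || p4j A B Y X j) cs.
Definition cfg (A B X Y : vt) := [&& dff A B, dff A X, dff A Y, dff B X, dff B Y & dff X Y].
Definition sc A B X Y := cfg A B X Y && [|| p1 A B X Y, p2 A B X Y, p3 A B X Y | p4 A B X Y].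
Definition good1 A B X Y P Q := [&& sc A P Y Q, sc P Q A X & sc Q B A P].
Definition good2 A B X Y P R := [&& sc A P Y R, sc P R X A & sc R B A P].
Definition good3 A B X Y P R V S := [&& sc A P X R, sc R B Y P & sc P V S R].
Definition cons1 (A B X Y : vt) := [&& dff A B, dff A X & dff A Y].
Definition cons3 (A B X Y : vt) := dff A X && dff B Y.
End Pat.

Definition col := (nat * nat * nat * nat)%type.
Definition mkc (a b x y : nat) : col := (a, b, x, y).
Definition canon_cols : seq col :=
  [:: mkc 0 0 0 0; mkc 0 0 0 1; mkc 0 0 1 0; mkc 0 0 1 1; mkc 0 0 1 2; mkc 0 1 0 0; mkc 0 1 0 1;
      mkc 0 1 0 2; mkc 0 1 1 0; mkc 0 1 1 1; mkc 0 1 1 2; mkc 0 1 2 0; mkc 0 1 2 1; mkc 0 1 2 2].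
Definition sel (c1 c2 c3 : col) (k : nat) : col :=
  if k == 0 then c1 else if k == 1 then c2 else c3.
Definition mkA c1 c2 c3 := fun k => (sel c1 c2 c3 k).1.1.1.
Definition mkB c1 c2 c3 := fun k => (sel c1 c2 c3 k).1.1.2.
Definition mkX c1 c2 c3 := fun k => (sel c1 c2 c3 k).1.2.
Definition mkY c1 c2 c3 := fun k => (sel c1 c2 c3 k).2.
Definition vt3 := nat -> nat.
Definition ords3 : seq nat := [:: 0; 1; 2].
Definition mk3 (i j k : nat) : vt3 := fun t => nth 0 [:: i; j; k] t.
Definition cands12 : seq (vt3 * vt3) :=
  [:: (mk3 1 2 2, mk3 2 0 2); (mk3 2 0 1, mk3 2 2 0); (mk3 1 2 0, mk3 0 2 2); (mk3 0 1 0, mk3 1 0 0)].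
Definition cands3 : seq (vt3 * vt3 * vt3 * vt3) :=
  [:: (mk3 1 2 2, mk3 0 2 2, mk3 0 1 2, mk3 0 0 2);
      (mk3 2 1 2, mk3 2 0 2, mk3 1 0 2, mk3 0 0 2);
      (mk3 0 2 0, mk3 0 2 1, mk3 2 2 1, mk3 1 2 1)].
Definition tab (F : vt3 -> vt3 -> vt3 -> vt3 -> bool) :=
  all (fun c1 => all (fun c2 => all (fun c3 =>
    F (mkA c1 c2 c3) (mkB c1 c2 c3) (mkX c1 c2 c3) (mkY c1 c2 c3)) canon_cols) canon_cols) canon_cols.
Definition T1 A B X Y := cons1 ords3 A B X Y ==> has (fun pq => good1 ords3 A B X Y pq.1 pq.2) cands12.
Definition T2 A B X Y := cons1 ords3 A B X Y ==> has (fun pq => good2 ords3 A B X Y pq.1 pq.2) cands12.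
Definition T3 A B X Y := cons3 ords3 A B X Y ==> has (fun c => good3 ords3 A B X Y c.1.1.1 c.1.1.2 c.1.2 c.2) cands3.




Lemma tab1 : tab T1. Proof. vm_compute. reflexivity. Qed.
Lemma tab2 : tab T2. Proof. vm_compute. reflexivity. Qed.
Lemma tab3 : tab T3. Proof. vm_compute. reflexivity. Qed.
Definition line3 (V S R : vt3) := has (fun c => dif3 (V c) (S c) (R c) &&
  all (fun k => (k != c) ==> (V k == R k) && (S k == R k)) ords3) ords3.
Definition small (w : vt3) := all (fun k => w k <= 2) ords3.
Lemma cands12_small : all (fun pq => small pq.1 && small pq.2) cands12. Proof. by vm_compute. Qed.
Lemma cands3_ok : all (fun c => [&& small c.1.1.1, small c.1.1.2, small c.1.2, small c.2 & line3 c.1.2 c.2 c.1.1.2]) cands3.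
Proof. by vm_compute. Qed.

Lemma I3_cases (z : 'I_3) : [\/ z = c0, z = c1 | z = c2].
Proof.
by case: z => [[|[|[|?]]] H] //; [constructor 1|constructor 2|constructor 3]; apply/val_inj.
Qed.

Definition mkf (u v : 'I_3) (z : 'I_3) : 'I_3 :=
  if u == v then z else if z == u then c0 else if z == v then c1 else c2.

Lemma mkf_inj u v : injective (mkf u v).
Proof.
move=> z1 z2; rewrite /mkf.
by case: (I3_cases u) => ->; case: (I3_cases v) => ->; case: (I3_cases z1) => ->;
  case: (I3_cases z2) => ->.
Qed.

Definition mkp u v : {perm 'I_3} := perm (@mkf_inj u v).

Lemma mkpE u v z : mkp u v z = mkf u v z.
Proof. by rewrite permE. Qed.

Lemma mkp_u u v : u != v -> mkp u v u = c0.
Proof. by rewrite mkpE /mkf => /negbTE ->; rewrite eqxx. Qed.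
Lemma mkp_v u v : u != v -> mkp u v v = c1.
Proof. by rewrite mkpE /mkf => uv; rewrite (negbTE uv) eq_sym (negbTE uv) eqxx. Qed.
Lemma mkp_w u v z : u != v -> z != u -> z != v -> mkp u v z = c2.
Proof. by rewrite mkpE /mkf => /negbTE -> /negbTE -> /negbTE ->. Qed.

Definition cv (a b x y : 'I_3) : 'I_3 :=
  if b != a then b else if x != a then x else if y != a then y else if a != c0 then c0 else c1.
Definition cperm a b x y := mkp a (cv a b x y).

Lemma cperm_canon a b x y :
  let p := cperm a b x y in (val (p a), val (p b), val (p x), val (p y)) \in canon_cols.
Proof.
rewrite /cperm /= !mkpE.
by case: (I3_cases a) => ->; case: (I3_cases b) => ->; case: (I3_cases x) => ->;
  case: (I3_cases y) => ->.
Qed.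

Section Paths.
Variable m : nat.
Notation V := (V m).

Inductive LP : V -> V -> seq V -> Prop :=
| LP1 u v w : is_edge u v w -> LP u w [:: u; v; w]
| LPc u v w b s : is_edge u v w -> LP w b s -> u \notin s -> v \notin s -> LP u b [:: u, v & s].

Lemma edge_ne (u v w : V) : is_edge u v w -> [/\ u != v, v != w & u != w].
Proof. by case. Qed.

Lemma edge_sym (u v w : V) : is_edge u v w -> is_edge w v u.
Proof.
case=> uv vw uw [i Hi]; split; rewrite 1?eq_sym //; exists i => j /Hi [-> ->]; done.
Qed.

Lemma LP_shape a b s : LP a b s -> exists t, s = a :: t.
Proof. by case=> *; eexists. Qed.

Lemma LP_in_head a b s : LP a b s -> a \in s.
Proof. by case=> *; rewrite inE eqxx. Qed.

Lemma LP_last a b s : LP a b s -> last a s = b.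
Proof.
elim=> //= u v w b' t _ Ht IH _ _; have [t' Et] := LP_shape Ht.
by rewrite Et /= in IH *.
Qed.

Lemma LP_uniq a b s : LP a b s -> uniq s.
Proof.
elim=> [u v w /edge_ne [uv vw uw]|u v w b' t /edge_ne [uv vw uw] Ht IH ut vt] /=.
  by rewrite !inE negb_or uv uw vw.
by rewrite inE negb_or uv ut vt IH.
Qed.

Lemma LP_odd a b s : LP a b s -> odd (size s).
Proof. by elim=> //= u v w b' t _ _ IH _ _; rewrite negbK. Qed.

Lemma LP_edges a b s : LP a b s -> forall d i, i < (size s)./2 ->
  is_edge (nth d s (2 * i)) (nth d s (2 * i).+1) (nth d s (2 * i).+2).
Proof.
elim=> [u v w E|u v w b' t E Ht IH _ _] d [|i] //.
  by have [t' ->] := LP_shape Ht.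
by rewrite mulnS => Hi; exact: IH Hi.
Qed.

Lemma pe_distinct (d : V) (s : seq V) i j : odd (size s) -> uniq s -> i < j -> j < (size s)./2 ->
  path_edge d s i != path_edge d s j.
Proof.
move=> os us ij js; apply/negP => /eqP E.
have hs : size s = 2 * (size s)./2 + 1.
  by rewrite -{1}(odd_double_half (size s)) os -muln2 mulnC addnC.
have : nth d s (2 * i).+1 \in path_edge d s j by rewrite -E !inE eqxx orbT.
move: hs js; set h := (size s)./2 => hs js; clearbody h.
rewrite !inE !nth_uniq //; try (rewrite hs; lia).
move=> H; lia.
Qed.

Lemma LP_loose a b s : LP a b s -> loose_path a b s.
Proof.
move=> H; have [t Es] := LP_shape H.
split; split.
- exact: LP_odd H.
- by rewrite Es.
- exact: LP_last H.
- exact: LP_uniq H.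
- by move=> i; apply: LP_edges H a i.
- move=> i j; apply: pe_distinct; [exact: LP_odd H|exact: LP_uniq H].
Qed.

Lemma LP_glue a mm b s1 s2 : LP a mm s1 -> LP mm b s2 ->
  (forall v, v \in s1 -> v \in s2 -> v = mm) -> LP a b (s1 ++ behead s2).
Proof.
move=> H1; elim: H1 s2.
- move=> u v w E s2 H2 D; have [t Et] := LP_shape H2; rewrite Et /= -Et.
  have [uv vw uw] := edge_ne E.
  apply: LPc E H2 _ _; apply/negP => Hin.
  + by move: (D u); rewrite !inE eqxx => /(_ isT Hin) /eqP; rewrite (negbTE uw).
  + by move: (D v); rewrite !inE eqxx orbT => /(_ isT Hin) /eqP; rewrite (negbTE vw).
- move=> u v w b' t E Ht IH ut vt s2 H2 D /=.
  have mt : b' \in t by rewrite -(LP_last Ht); have [t' ->] := LP_shape Ht; exact: (mem_last w t').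
  apply: LPc E (IH _ H2 _) _ _.
  + by move=> z zt zs; apply: D => //; rewrite !inE zt !orbT.
  + rewrite mem_cat negb_or ut /=; apply/negP => Hb.
    have := D u; rewrite inE eqxx => /(_ isT (mem_behead Hb)) Eu.
    by move: ut; rewrite Eu mt.
  + rewrite mem_cat negb_or vt /=; apply/negP => Hb.
    have := D v; rewrite !inE eqxx orbT => /(_ isT (mem_behead Hb)) Eu.
    by move: vt; rewrite Eu mt.
Qed.

Lemma mem_glue (s1 s2 : seq V) mm z : mm \in s1 -> head mm s2 = mm -> s2 != [::] ->
  (z \in s1 ++ behead s2) = (z \in s1) || (z \in s2).
Proof.
case: s2 => //= h t s1m -> _; rewrite mem_cat inE.
by case: (z =P mm) => [->|]; rewrite ?s1m ?orbF.
Qed.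

Lemma LP_nil a b s : LP a b s -> s != [::].
Proof. by case. Qed.

Lemma LP_head a b s : LP a b s -> head a s = a.
Proof. by case. Qed.

Lemma LP_rev a b s : LP a b s -> LP b a (rev s).
Proof.
elim=> [u v w E|u v w b' t E Ht IH ut vt].
  by rewrite /rev /=; apply: LP1; apply: edge_sym.
have -> : rev [:: u, v & t] = rev t ++ behead [:: w; v; u].
  by rewrite !rev_cons -!cats1 -catA.
apply: LP_glue IH (LP1 (edge_sym E)) _ => z; rewrite mem_rev !inE.
move=> zt /or3P [/eqP //|/eqP zv|/eqP zu]; [by move: vt; rewrite -zv zt|by move: ut; rewrite -zu zt].
Qed.
End Paths.

Lemma LP_map m m' (f : V m -> V m') a b s : injective f ->
  (forall u v w, is_edge u v w -> is_edge (f u) (f v) (f w)) -> LP a b s -> LP (f a) (f b) (map f s).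
Proof.
move=> fi fe; elim=> [u v w E|u v w b' t E Ht IH ut vt] /=.
  by apply: LP1; apply: fe.
by apply: LPc (fe _ _ _ E) IH _ _; rewrite mem_map.
Qed.

Lemma odd_size_eq (T : Type) (s : seq T) : odd (size s) -> size s = 2 * (size s)./2 + 1.
Proof. by move=> os; rewrite -{1}(odd_double_half (size s)) os -muln2 mulnC addnC. Qed.

Lemma lp_LP m n : forall (a b : V m) s, size s <= n -> 1 < size s -> loose_path a b s -> LP a b s.
Proof.
elim: n => [|n IH] a b [|u [|v [|w t]]] //= Hn H1 [[os ha hl us] [he hd]]; rewrite /= in os; first by [].
move: ha => /= ha; subst u; clear H1.
move: us => /andP [].
rewrite !inE !negb_or => /and3P [av aw aT] /andP [].
move=> /andP [vw vt] ut.
have E0 : is_edge a v w by exact: (he 0 isT).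
move: Hn hl aT vt ut os he hd; case: t => [|w' t'] Hn hl aT vt ut os he hd.
  by rewrite /= in hl; rewrite -hl; apply: LP1.
apply: LPc E0 _ _ _; last (by rewrite inE negb_or vw vt); last (by rewrite inE negb_or aw aT).
apply: IH => //.
- by rewrite /= !ltnS in Hn *; apply: ltnW.
- set t := w' :: t'.
  have os' : odd (size (w :: t)) by move: os; rewrite /= !negbK.
  have hs := odd_size_eq os'.
  split; split => //.
  + move=> i Hi.
    have He : is_edge (nth a (w :: t) (2 * i)) (nth a (w :: t) (2 * i).+1) (nth a (w :: t) (2 * i).+2).
      by have := he i.+1; rewrite mulnS; apply.
    change (is_edge (nth w (w :: t) (2 * i)) (nth w (w :: t) (2 * i).+1) (nth w (w :: t) (2 * i).+2)).
    have E : forall k, k < size (w :: t) -> nth w (w :: t) k = nth a (w :: t) k.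
      by move=> k Hk; apply: set_nth_default.
    rewrite !E; [exact: He| | |]; rewrite hs; lia.
  + by move=> i j; apply: pe_distinct.
Qed.

Section Layers.
Variable m : nat.
Definition lay (c : 'I_3) (v : V m) : V m.+1 :=
  [ffun i => if unlift ord_max i is Some j then v j else c].

Lemma widen_lift (i : 'I_m) : widen_ord (leqnSn m) i = lift ord_max i.
Proof. by apply/val_inj; rewrite /= /bump leqNgt ltn_ord. Qed.

Lemma lst_lay c v : lst (lay c v) = c.
Proof. by rewrite /lst ffunE unlift_none. Qed.

Lemma pre_lay c v : pre (lay c v) = v.
Proof. by apply/ffunP => i; rewrite ffunE ffunE widen_lift liftK. Qed.

Lemma co_lay c v i : co (lay c v) i = v i.
Proof. by rewrite /co ffunE widen_lift liftK. Qed.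

Lemma lay_eta (w : V m.+1) : lay (lst w) (pre w) = w.
Proof.
apply/ffunP => i; rewrite ffunE; case: unliftP => [j ->|->] //.
by rewrite ffunE widen_lift.
Qed.

Lemma lay_inj c : injective (lay c).
Proof. by move=> u v E; rewrite -(pre_lay c u) E pre_lay. Qed.

Lemma lay_eq c c' u u' : (lay c u == lay c' u') = (c == c') && (u == u').
Proof.
apply/eqP/andP => [E|[/eqP -> /eqP ->] //]; split; apply/eqP.
  by rewrite -(lst_lay c u) E lst_lay.
by rewrite -(pre_lay c u) E pre_lay.
Qed.

Lemma edge_lay c u v w : is_edge u v w -> is_edge (lay c u) (lay c v) (lay c w).
Proof.
case=> uv vw uw [i Hi]; split; rewrite ?lay_eq ?eqxx //.
exists (lift ord_max i) => j; case: (unliftP ord_max j) => [j' ->|->].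
  by rewrite !ffunE liftK (inj_eq (@lift_inj _ _)) => /Hi [-> ->].
by rewrite !ffunE unlift_none.
Qed.

Lemma edge_vert c1 c2 c3 v : [&& c1 != c2, c2 != c3 & c1 != c3] ->
  is_edge (lay c1 v) (lay c2 v) (lay c3 v).
Proof.
case/and3P=> h1 h2 h3; split; rewrite ?lay_eq ?(negbTE h1) ?(negbTE h2) ?(negbTE h3) //.
exists ord_max => j; case: (unliftP ord_max j) => [j' ->|->]; last by rewrite eqxx.
by rewrite !ffunE liftK.
Qed.

Lemma mem_map_lay c (s : seq (V m)) (w : V m.+1) : (w \in map (lay c) s) = (lst w == c) && (pre w \in s).
Proof.
rewrite -{1}(lay_eta w); case: (lst w =P c) => [<-|ne] /=; first by rewrite mem_map //; apply: lay_inj.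
apply/mapP => [[z _ E]]; apply: ne; by rewrite -(lst_lay c z) -E lst_lay.
Qed.
End Layers.

Section Sym.
Variables (m : nat) (sg : {perm 'I_m}) (p : {ffun 'I_m -> {perm 'I_3}}).
Definition isg : {perm 'I_m} := (sg^-1)%g.
Definition ip : {ffun 'I_m -> {perm 'I_3}} := [ffun k => ((p (isg k))^-1)%g].
Notation g := (sym sg p).
Notation gi := (sym isg ip).

Lemma symK : cancel g gi.
Proof.
move=> v; apply/ffunP => k; rewrite !ffunE /isg permKV.
by rewrite permK.
Qed.
Lemma symKV : cancel gi g.
Proof.
move=> v; apply/ffunP => k; rewrite !ffunE /isg permK.
by rewrite permKV.
Qed.
Lemma sym_inj : injective g. Proof. exact: can_inj symK. Qed.
End Sym.

Lemma sym_edge m (sg : {perm 'I_m}) p u v w : is_edge u v w -> is_edge (sym sg p u) (sym sg p v) (sym sg p w).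
Proof.
case=> uv vw uw [i Hi]; split; rewrite ?(inj_eq (@sym_inj _ _ _)) //.
exists ((sg^-1)%g i) => j ji; rewrite !ffunE.
have : sg j != i by apply: contra ji => /eqP <-; rewrite permK.
by case/Hi => -> ->.
Qed.

Lemma lp_LP' m (a b : V m) s : a != b -> loose_path a b s -> LP a b s.
Proof.
move=> ab H; apply: (@lp_LP m (size s)) => //.
case: H => [[os ha hl _] _]; case: s os ha hl => [|u [|v t]] //= _ ->.
by move=> E; rewrite E eqxx in ab.
Qed.

Lemma covered_LP m (a b x y : V m) : a != b -> covered a b x y ->
  exists s, LP a b s /\ (forall v, v \in s = (v != x) && (v != y)).
Proof. by move=> ab [s [H1 H2]]; exists s; split => //; apply: lp_LP'. Qed.

Lemma covered_swap m (a b x y : V m) : covered a b x y -> covered a b y x.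
Proof. by case=> s [H1 H2]; exists s; split => // v; rewrite H2 andbC. Qed.

Lemma covered_rev m (a b x y : V m) : a != b -> covered a b x y -> covered b a x y.
Proof.
move=> ab /(covered_LP ab) [s [H1 H2]]; exists (rev s); split.
  by apply: LP_loose; apply: LP_rev.
by move=> v; rewrite mem_rev H2.
Qed.

Lemma covered_sym m (sg : {perm 'I_m}) p (a b x y : V m) : a != b ->
  covered (sym sg p a) (sym sg p b) (sym sg p x) (sym sg p y) -> covered a b x y.
Proof.
move=> ab; have gab : sym sg p a != sym sg p b by rewrite (inj_eq (@sym_inj _ sg p)).
move/(covered_LP gab) => [s [H1 H2]].
exists (map (sym (isg sg) (ip sg p)) s); split.
  apply: LP_loose; rewrite -[a](symK sg p a) -[b](symK sg p b).
  apply: LP_map H1; first exact: can_inj (symKV sg p).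
  by move=> u v w; apply: sym_edge.
move=> v; rewrite -{1}(symK sg p v) mem_map; last exact: can_inj (symKV sg p).
by rewrite H2 !(inj_eq (@sym_inj _ sg p)).
Qed.

Section Tsym.
Variables (n : nat) (j : 'I_n.+1) (pi : {perm 'I_3}).
Definition tsg : {perm 'I_n.+1} := tperm j ord_max.
Definition tp : {ffun 'I_n.+1 -> {perm 'I_3}} := [ffun i => if i == ord_max then pi else 1%g].
Notation g := (sym tsg tp).

Lemma g_lst (v : V n.+1) : lst (g v) = pi (v j).
Proof. by rewrite /lst ffunE ffunE eqxx /tsg tpermR. Qed.

Lemma g_co (v : V n.+1) i : co (g v) i = v (tsg (widen_ord (leqnSn n) i)).
Proof.
rewrite /co !ffunE.
have -> : (widen_ord (leqnSn n) i == ord_max) = false.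
  by apply/negbTE; rewrite -val_eqE /= neq_ltn ltn_ord.
by rewrite perm1.
Qed.

Lemma g_pre k : k != j -> exists i : 'I_n, tsg (widen_ord (leqnSn n) i) = k.
Proof.
move=> kj.
have h : tsg k != ord_max.
  apply: contra kj => /eqP E; apply/eqP.
  by rewrite -(tpermK j ord_max k) -/tsg E /tsg tpermR.
have hk : val (tsg k) < n.
  by move: h (ltn_ord (tsg k)); rewrite -val_eqE /= ltnS leq_eqVlt => /negbTE ->.
exists (Ordinal hk); rewrite (_ : widen_ord _ _ = tsg k); last exact: val_inj.
by rewrite /tsg tpermK.
Qed.

Lemma g_neo (u w : V n.+1) : neo (enum 'I_n.+1) j u w -> pre (g u) != pre (g w).
Proof.
case/hasP=> k _ /andP [kj ne]; have [i Ei] := g_pre kj.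
have E1 : pre (g u) i = u k by rewrite ffunE -/(co (g u) i) g_co Ei.
have E2 : pre (g w) i = w k by rewrite ffunE -/(co (g w) i) g_co Ei.
by apply/negP => /eqP E; rewrite -E1 -E2 E eqxx in ne.
Qed.

Lemma g_ex (Pr : 'I_3 -> 'I_3 -> 'I_3 -> 'I_3 -> bool) (A B X Y : V n.+1) :
  has (fun k => (k != j) && Pr (A k) (B k) (X k) (Y k)) (enum 'I_n.+1) ->
  exists i : 'I_n, Pr (co (g A) i) (co (g B) i) (co (g X) i) (co (g Y) i).
Proof.
case/hasP=> k _ /andP [kj H]; have [i Ei] := g_pre kj.
by exists i; rewrite !g_co Ei.
Qed.
End Tsym.

Notation cs n := (enum 'I_n.+1).

Lemma p3j_ok n (A B X Y : V n.+1) j : p3j (cs n) A B X Y j ->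
  let g := sym (@tsg n j) (@tp n (mkp (A j) (B j))) in phi3 (g A) (g B) (g X) (g Y).
Proof.
case/and4P=> /eqP ax /eqP bY ab Hi /=; split.
  by rewrite /t3 !g_lst -ax -bY mkp_u // mkp_v.
have [i Hi'] := @g_ex n j (mkp (A j) (B j)) (fun a b x y => (a == y) || (b == x)) A B X Y Hi.
by exists i; case/orP: Hi' => /eqP; [left|right].
Qed.

Lemma p3_ok n (A B X Y : V n.+1) : p3 (cs n) A B X Y -> of_type (@phi3 n) A B X Y.
Proof.
case/hasP=> j _ /orP [H|H]; exists (@tsg n j), (@tp n (mkp (A j) (B j))).
  by left; apply: p3j_ok.
by right; apply: p3j_ok.
Qed.

Lemma p1j_ok n (A B X Y : V n.+1) j : p1j (cs n) A B X Y j ->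
  let g := sym (@tsg n j) (@tp n (mkp (A j) (B j))) in phi1 (g A) (g B) (g X) (g Y).
Proof.
case/and5P=> /eqP ax /and3P [ab bY aY] nB nX /andP [nY Hi] /=; split.
  rewrite /t1 /t4 !g_lst -?ax -?bx ?mkp_u ?mkp_v ?mkp_w // 1?eq_sym //; split => //.
  by rewrite !inE !negb_or !g_neo.
have [i Hi'] := @g_ex n j (mkp (A j) (B j)) (fun a b x y => [|| b == a, b == x | b == y]) A B X Y Hi.
by exists i; rewrite !inE.
Qed.

Lemma p1_ok n (A B X Y : V n.+1) : p1 (cs n) A B X Y -> of_type (@phi1 n) A B X Y.
Proof.
case/hasP=> j _ /orP [H|H]; exists (@tsg n j), (@tp n (mkp (A j) (B j))).
  by left; apply: p1j_ok.
by right; apply: p1j_ok.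
Qed.

Lemma p4j_ok n (A B X Y : V n.+1) j : p4j (cs n) A B X Y j ->
  let g := sym (@tsg n j) (@tp n (mkp (A j) (B j))) in phi4 (g A) (g B) (g X) (g Y).
Proof.
case/and5P=> /eqP bx /and3P [ab bY aY] nA nX /andP [nY Hi] /=; split.
  split; rewrite ?g_lst -?bx ?mkp_u ?mkp_v ?mkp_w // 1?eq_sym //.
  by rewrite !inE !negb_or !g_neo.
have [i Hi'] := @g_ex n j (mkp (A j) (B j)) (fun a b x y => [|| a == b, a == x | a == y]) A B X Y Hi.
by exists i; rewrite !inE.
Qed.

Lemma p4_ok n (A B X Y : V n.+1) : p4 (cs n) A B X Y -> of_type (@phi4 n) A B X Y.
Proof.
case/hasP=> j _ /orP [H|H]; exists (@tsg n j), (@tp n (mkp (A j) (B j))).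
  by left; apply: p4j_ok.
by right; apply: p4j_ok.
Qed.

Lemma p2_ok n (A B X Y : V n.+1) : p2 (cs n) A B X Y -> of_type (@phi2 n) A B X Y.
Proof.
case/hasP=> j _ /and4P [/eqP ab /and3P [ax xy ay] Hn Hi].
exists (@tsg n j), (@tp n (mkp (A j) (X j))); left => /=.
set g := sym _ _; split.
  have L : [/\ lst (g A) = c0, lst (g B) = c0, lst (g X) = c1 & lst (g Y) = c2].
    by rewrite !g_lst -ab mkp_u // mkp_v // mkp_w // eq_sym.
  case/orP: Hn => /andP [/andP [n1 n2] n3]; [left|right]; case: L => L1 L2 L3 L4; split => //;
    by rewrite !inE !negb_or !g_neo.
case/hasP: Hi => i0 _ /hasP [i0' _] /and4P [i0j i0'j ne Hagr].
have [i Ei] := g_pre i0j; have [i' Ei'] := g_pre i0'j.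
have ii' : i != i'.
  by apply: contra ne => /eqP E; rewrite -Ei -Ei' E.
exists i, i'.
have Hc : forall v k, tsg j (widen_ord (leqnSn n) k) = v -> forall (u : V n.+1), co (g u) k = u v.
  by move=> v k E u; rewrite g_co E.
case/or4P: Hagr => /andP [/eqP E1 /eqP E2].
- exists (g A), (g X); split; rewrite ?inE ?eqxx ?orbT //; by rewrite ?(Hc _ _ Ei) ?(Hc _ _ Ei').
- exists (g A), (g Y); split; rewrite ?inE ?eqxx ?orbT //; by rewrite ?(Hc _ _ Ei) ?(Hc _ _ Ei').
- exists (g B), (g X); split; rewrite ?inE ?eqxx ?orbT //; by rewrite ?(Hc _ _ Ei) ?(Hc _ _ Ei').
- exists (g B), (g Y); split; rewrite ?inE ?eqxx ?orbT //; by rewrite ?(Hc _ _ Ei) ?(Hc _ _ Ei').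
Qed.

Lemma dff_ne n (u w : V n.+1) : dff (cs n) u w -> u != w.
Proof. by case/hasP=> k _; apply: contra => /eqP ->. Qed.

Lemma sc_ok n (A B X Y : V n.+1) : sc (cs n) A B X Y ->
  config A B X Y /\ (of_type (@phi1 n) A B X Y \/ of_type (@phi2 n) A B X Y \/
     of_type (@phi3 n) A B X Y \/ of_type (@phi4 n) A B X Y).
Proof.
case/andP=> /and5P [ab ax ay bx /andP [b_y xy]] H; split.
  by split; split; apply: dff_ne.
case/or4P: H => H; [left; exact: p1_ok|right; left; exact: p2_ok|right; right; left; exact: p3_ok|right; right; right; exact: p4_ok].
Qed.

Section Transfer.
Variables (I I' T T' : eqType) (cs : seq I) (cs' : seq I') (h : I -> I') (F : I -> T' -> T).
Hypotheses (hin : forall k, k \in cs -> h k \in cs') (hinj : {in cs &, injective h})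
  (Finj : forall k, injective (F k)).
Definition R (u' : I -> T) (u : I' -> T') := forall k, k \in cs -> u' k = F k (u (h k)).

Lemma Req u' u w' w k : R u' u -> R w' w -> k \in cs -> (u' k == w' k) = (u (h k) == w (h k)).
Proof. by move=> Ru Rw kc; rewrite Ru // Rw // (inj_eq (@Finj k)). Qed.

Lemma hneq j k : j \in cs -> k \in cs -> (h k != h j) = (k != j).
Proof. by move=> jc kc; rewrite (inj_in_eq hinj). Qed.

Lemma hasT (P : pred I) (P' : pred I') : (forall k, k \in cs -> P k -> P' (h k)) -> has P cs -> has P' cs'.
Proof. by move=> H /hasP [k kc Pk]; apply/hasP; exists (h k); [apply: hin|apply: H]. Qed.

Variables (A' B' X' Y' : I -> T) (A B X Y : I' -> T').
Hypotheses (RA : R A' A) (RB : R B' B) (RX : R X' X) (RY : R Y' Y).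

Lemma dffT u' u w' w : R u' u -> R w' w -> dff cs u' w' -> dff cs' u w.
Proof. by move=> Ru Rw; apply: hasT => k kc; rewrite (Req Ru Rw kc). Qed.

Lemma neoT j u' u w' w : j \in cs -> R u' u -> R w' w -> neo cs j u' w' -> neo cs' (h j) u w.
Proof. by move=> jc Ru Rw; apply: hasT => k kc; rewrite (Req Ru Rw kc) hneq. Qed.

Ltac rq H kc R1 R2 R3 R4 := rewrite ?(Req R1 R2 kc) ?(Req R1 R3 kc) ?(Req R1 R4 kc)
  ?(Req R2 R1 kc) ?(Req R2 R3 kc) ?(Req R2 R4 kc) ?(Req R3 R1 kc) ?(Req R3 R2 kc)
  ?(Req R3 R4 kc) ?(Req R4 R1 kc) ?(Req R4 R2 kc) ?(Req R4 R3 kc) in H.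

Lemma p1jT j (u1' u2' u3' u4' : I -> T) (u1 u2 u3 u4 : I' -> T') : j \in cs ->
  R u1' u1 -> R u2' u2 -> R u3' u3 -> R u4' u4 -> p1j cs u1' u2' u3' u4' j -> p1j cs' u1 u2 u3 u4 (h j).
Proof.
move=> jc R1 R2 R3 R4 /and5P [e d n1 n2 /andP [n3 hh]].
rq e jc R1 R2 R3 R4; rewrite /dif3 in d; rq d jc R1 R2 R3 R4.
apply/and5P; split => //; try exact: (neoT jc _ _ n1); try exact: (neoT jc _ _ n2).
apply/andP; split; first exact: (neoT jc _ _ n3).
move: hh; apply: hasT => k kc /andP [kj H]; rq H kc R1 R2 R3 R4; by rewrite hneq // kj.
Qed.

Lemma p3jT j (u1' u2' u3' u4' : I -> T) (u1 u2 u3 u4 : I' -> T') : j \in cs ->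
  R u1' u1 -> R u2' u2 -> R u3' u3 -> R u4' u4 -> p3j cs u1' u2' u3' u4' j -> p3j cs' u1 u2 u3 u4 (h j).
Proof.
move=> jc R1 R2 R3 R4 /and4P [e1 e2 e3 hh].
rq e1 jc R1 R2 R3 R4; rq e2 jc R1 R2 R3 R4; rq e3 jc R1 R2 R3 R4.
apply/and4P; split => //.
move: hh; apply: hasT => k kc /andP [kj H]; rq H kc R1 R2 R3 R4; by rewrite hneq // kj.
Qed.

Lemma p4jT j (u1' u2' u3' u4' : I -> T) (u1 u2 u3 u4 : I' -> T') : j \in cs ->
  R u1' u1 -> R u2' u2 -> R u3' u3 -> R u4' u4 -> p4j cs u1' u2' u3' u4' j -> p4j cs' u1 u2 u3 u4 (h j).
Proof.
move=> jc R1 R2 R3 R4 /and5P [e d n1 n2 /andP [n3 hh]].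
rq e jc R1 R2 R3 R4; rewrite /dif3 in d; rq d jc R1 R2 R3 R4.
apply/and5P; split => //; try exact: (neoT jc _ _ n1); try exact: (neoT jc _ _ n2).
apply/andP; split; first exact: (neoT jc _ _ n3).
move: hh; apply: hasT => k kc /andP [kj H]; rq H kc R1 R2 R3 R4; by rewrite hneq // kj.
Qed.

Lemma p2jT j (u1' u2' u3' u4' : I -> T) (u1 u2 u3 u4 : I' -> T') : j \in cs ->
  R u1' u1 -> R u2' u2 -> R u3' u3 -> R u4' u4 -> p2j cs u1' u2' u3' u4' j -> p2j cs' u1 u2 u3 u4 (h j).
Proof.
move=> jc R1 R2 R3 R4 /and4P [e d nn hh].
rq e jc R1 R2 R3 R4; rewrite /dif3 in d; rq d jc R1 R2 R3 R4.
apply/and4P; split => //.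
  case/orP: nn => /andP [/andP [n1 n2] n3]; apply/orP; [left|right];
  (apply/andP; split; [apply/andP; split; [exact: (neoT jc _ _ n1)|exact: (neoT jc _ _ n2)]|exact: (neoT jc _ _ n3)]).
move: hh; apply: hasT => k kc; apply: hasT => k' kc' /and4P [kj k'j kk' H].
rewrite /agr in H; rq H kc R1 R2 R3 R4; rq H kc' R1 R2 R3 R4.
by rewrite !hneq // kj k'j kk' /agr.
Qed.

Lemma p1T (u1' u2' u3' u4' : I -> T) (u1 u2 u3 u4 : I' -> T') :
  R u1' u1 -> R u2' u2 -> R u3' u3 -> R u4' u4 -> p1 cs u1' u2' u3' u4' -> p1 cs' u1 u2 u3 u4.
Proof.
move=> R1 R2 R3 R4; apply: hasT => k kc /orP [H|H]; apply/orP; [left|right];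
  by apply: (p1jT kc) H.
Qed.
Lemma p3T (u1' u2' u3' u4' : I -> T) (u1 u2 u3 u4 : I' -> T') :
  R u1' u1 -> R u2' u2 -> R u3' u3 -> R u4' u4 -> p3 cs u1' u2' u3' u4' -> p3 cs' u1 u2 u3 u4.
Proof.
move=> R1 R2 R3 R4; apply: hasT => k kc /orP [H|H]; apply/orP; [left|right];
  by apply: (p3jT kc) H.
Qed.
Lemma p4T (u1' u2' u3' u4' : I -> T) (u1 u2 u3 u4 : I' -> T') :
  R u1' u1 -> R u2' u2 -> R u3' u3 -> R u4' u4 -> p4 cs u1' u2' u3' u4' -> p4 cs' u1 u2 u3 u4.
Proof.
move=> R1 R2 R3 R4; apply: hasT => k kc /orP [H|H]; apply/orP; [left|right];
  by apply: (p4jT kc) H.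
Qed.
Lemma p2T (u1' u2' u3' u4' : I -> T) (u1 u2 u3 u4 : I' -> T') :
  R u1' u1 -> R u2' u2 -> R u3' u3 -> R u4' u4 -> p2 cs u1' u2' u3' u4' -> p2 cs' u1 u2 u3 u4.
Proof.
move=> R1 R2 R3 R4; apply: hasT => k kc H; exact: (p2jT kc) H.
Qed.

Lemma scT (u1' u2' u3' u4' : I -> T) (u1 u2 u3 u4 : I' -> T') :
  R u1' u1 -> R u2' u2 -> R u3' u3 -> R u4' u4 -> sc cs u1' u2' u3' u4' -> sc cs' u1 u2 u3 u4.
Proof.
move=> R1 R2 R3 R4 /andP [/and5P [d1 d2 d3 d4 /andP [d5 d6]] H].
apply/andP; split.
  by apply/and5P; split; [exact: dffT d1|exact: dffT d2|exact: dffT d3|exact: dffT d4|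
    apply/andP; split; [exact: dffT d5|exact: dffT d6]].
case/or4P: H => H; apply/or4P; [constructor 1; exact: p1T H|constructor 2; exact: p2T H|
  constructor 3; exact: p3T H|constructor 4; exact: p4T H].
Qed.
End Transfer.

Definition to3 (n : nat) : 'I_3 := match n with 0 => c0 | 1 => c1 | _ => c2 end.
Lemma to3K k : k <= 2 -> val (to3 k) = k.
Proof. by case: k => [|[|[|]]]. Qed.

Lemma has_all (T : Type) (p q : pred T) s : has p s -> all q s -> exists x, p x && q x.
Proof.
elim: s => //= x s IH /orP [px /andP [qx _]|hs /andP [_ ha]]; first by exists x; rewrite px qx.
exact: IH.
Qed.

Section Inst.
Variables (n : nat) (g0 g1 g2 : 'I_n.+1) (A B X Y : V n.+1).
Hypothesis gu : uniq [:: g0; g1; g2].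
Definition hh (k : nat) : 'I_n.+1 := if k == 0 then g0 else if k == 1 then g1 else g2.
Definition pis (k : nat) : {perm 'I_3} := cperm (A (hh k)) (B (hh k)) (X (hh k)) (Y (hh k)).
Definition FF (k : nat) (z : 'I_3) : nat := val (pis k z).
Definition colk k : col := (FF k (A (hh k)), FF k (B (hh k)), FF k (X (hh k)), FF k (Y (hh k))).
Definition rA := mkA (colk 0) (colk 1) (colk 2).
Definition rB := mkB (colk 0) (colk 1) (colk 2).
Definition rX := mkX (colk 0) (colk 1) (colk 2).
Definition rY := mkY (colk 0) (colk 1) (colk 2).
Definition ext (w : nat -> nat) : V n.+1 :=
  [ffun i => if i == g0 then (pis 0)^-1%g (to3 (w 0)) else if i == g1 then (pis 1)^-1%g (to3 (w 1))
             else if i == g2 then (pis 2)^-1%g (to3 (w 2)) else c0].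

Lemma FF_inj k : injective (FF k).
Proof. by move=> z1 z2 /val_inj /perm_inj. Qed.

Lemma hh_in k : k \in ords3 -> hh k \in enum 'I_n.+1.
Proof. by rewrite mem_enum. Qed.

Lemma hh_inj : {in ords3 &, injective hh}.
Proof.
move: gu; rewrite /= !inE !negb_or => /andP [/andP [n01 n02] /andP [n12 _]].
move=> k1 k2; rewrite !inE => /or3P [] /eqP -> /or3P [] /eqP -> // E.
all: rewrite /hh /= in E; by move: n01 n02 n12; rewrite E ?eqxx.
Qed.

Notation RR := (R ords3 hh FF).

Lemma col_canon k : colk k \in canon_cols.
Proof. exact: cperm_canon. Qed.

Lemma RA : RR rA A.
Proof. by move=> k; rewrite !inE => /or3P [] /eqP ->. Qed.
Lemma RB : RR rB B.
Proof. by move=> k; rewrite !inE => /or3P [] /eqP ->. Qed.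
Lemma RX : RR rX X.
Proof. by move=> k; rewrite !inE => /or3P [] /eqP ->. Qed.
Lemma RY : RR rY Y.
Proof. by move=> k; rewrite !inE => /or3P [] /eqP ->. Qed.

Lemma Rext w : small w -> RR w (ext w).
Proof.
move: gu; rewrite /= !inE !negb_or => /andP [/andP [n01 n02] /andP [n12 _]].
move=> /and4P [s0 s1 s2 _] k; rewrite !inE => /or3P [] /eqP -> /=; rewrite /FF ffunE /hh /=.
- by rewrite eqxx permKV to3K.
- by rewrite eq_sym (negbTE n01) eqxx permKV to3K.
- by rewrite eq_sym (negbTE n02) eq_sym (negbTE n12) eqxx permKV to3K.
Qed.

Lemma scR (u1' u2' u3' u4' : nat -> nat) (u1 u2 u3 u4 : V n.+1) :
  RR u1' u1 -> RR u2' u2 -> RR u3' u3 -> RR u4' u4 -> sc ords3 u1' u2' u3' u4' ->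
  sc (enum 'I_n.+1) u1 u2 u3 u4.
Proof.
apply: scT; [exact: hh_in|exact: hh_inj|exact: FF_inj].
Qed.

Lemma tabinst F : tab F -> F rA rB rX rY.
Proof.
move=> /allP /(_ _ (col_canon 0)) /allP /(_ _ (col_canon 1)) /allP /(_ _ (col_canon 2)).
done.
Qed.

Lemma ext_at w k : k \in ords3 -> ext w (hh k) = (pis k)^-1%g (to3 (w k)).
Proof.
move: gu; rewrite /= !inE !negb_or => /andP [/andP [n01 n02] /andP [n12 _]].
move=> /or3P [] /eqP -> /=; rewrite ffunE /hh /=.
- by rewrite eqxx.
- by rewrite eq_sym (negbTE n01) eqxx.
- by rewrite eq_sym (negbTE n02) eq_sym (negbTE n12) eqxx.
Qed.

Lemma ext_eq w1 w2 j : (forall k, k \in ords3 -> hh k = j -> w1 k = w2 k) -> ext w1 j = ext w2 j.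
Proof.
move=> H; rewrite !ffunE.
case: (j =P g0) => [E|_]; first by rewrite (H 0) //.
case: (j =P g1) => [E|_]; first by rewrite (H 1) //.
case: (j =P g2) => [E|_]; first by rewrite (H 2) //.
done.
Qed.

Lemma ext_ne w1 w2 k : k \in ords3 -> small w1 -> small w2 -> w1 k != w2 k -> ext w1 != ext w2.
Proof.
move=> kc /allP /(_ k kc) s1 /allP /(_ k kc) s2 ne; apply/negP => /eqP E.
have := congr1 (fun f : V n.+1 => f (hh k)) E; rewrite /= !ext_at // => /perm_inj E'.
by move: ne; rewrite -(to3K s1) -(to3K s2) E' eqxx.
Qed.

Lemma line_edge V' S' R' : small V' -> small S' -> small R' -> line3 V' S' R' ->
  is_edge (ext V') (ext S') (ext R').
Proof.
move=> sV sS sR /hasP [c cc /andP [/and3P [d1 d2 d3] /allP Ha]].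
split; [exact: (ext_ne cc)|exact: (ext_ne cc)|exact: (ext_ne cc)|].
exists (hh c) => j jc.
have H : forall k, k \in ords3 -> hh k = j -> (V' k = R' k) /\ (S' k = R' k).
  move=> k kc hk; have kc' : k != c by apply: contra jc => /eqP <-; rewrite hk.
  by have := Ha k kc; rewrite kc' /= => /andP [/eqP -> /eqP ->].
by split; apply: ext_eq => k kc hk; have [e1 e2] := H k kc hk; rewrite ?e1 ?e2.
Qed.

Lemma choose1 : cons1 ords3 rA rB rX rY -> exists P Q : V n.+1, good1 (enum 'I_n.+1) A B X Y P Q.
Proof.
move=> H; have := tabinst tab1; rewrite /T1 H implyTb => Hh; have [[P' Q'] /andP [/and3P [h1 h2 h3] /andP [sP sQ]]] := has_all Hh cands12_small.
exists (ext P'), (ext Q'); apply/and3P; split.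
- exact: (scR RA (Rext sP) RY (Rext sQ) h1).
- exact: (scR (Rext sP) (Rext sQ) RA RX h2).
- exact: (scR (Rext sQ) RB RA (Rext sP) h3).
Qed.

Lemma choose2 : cons1 ords3 rA rB rX rY -> exists P Q : V n.+1, good2 (enum 'I_n.+1) A B X Y P Q.
Proof.
move=> H; have := tabinst tab2; rewrite /T2 H implyTb => Hh; have [[P' Q'] /andP [/and3P [h1 h2 h3] /andP [sP sQ]]] := has_all Hh cands12_small.
exists (ext P'), (ext Q'); apply/and3P; split.
- exact: (scR RA (Rext sP) RY (Rext sQ) h1).
- exact: (scR (Rext sP) (Rext sQ) RX RA h2).
- exact: (scR (Rext sQ) RB RA (Rext sP) h3).
Qed.

Lemma choose3 : cons3 ords3 rA rB rX rY -> exists P Q V' S : V n.+1,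
  good3 (enum 'I_n.+1) A B X Y P Q V' S /\ is_edge V' S Q.
Proof.
move=> H; have := tabinst tab3; rewrite /T3 H implyTb => Hh; have [[[[P' Q'] V'] S'] /andP [/and3P [h1 h2 h3] /and5P [sP sQ sV sS L]]] := has_all Hh cands3_ok.
exists (ext P'), (ext Q'), (ext V'), (ext S'); split; last exact: line_edge.
apply/and3P; split.
- exact: (scR RA (Rext sP) RX (Rext sQ) h1).
- exact: (scR (Rext sQ) RB RY (Rext sP) h2).
- exact: (scR (Rext sP) (Rext sV) (Rext sS) (Rext sQ) h3).
Qed.
End Inst.

Lemma LP_glue2 m (a mm b : V m) s1 s2 : LP a mm s1 -> LP mm b s2 ->
  (forall v, v \in s1 -> v \in s2 -> v = mm) ->
  LP a b (s1 ++ behead s2) /\ (forall v, (v \in s1 ++ behead s2) = (v \in s1) || (v \in s2)).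
Proof.
move=> H1 H2 D; split; first exact: LP_glue H1 H2 D.
move=> v; apply: mem_glue; [|exact: LP_head H2|exact: LP_nil H2].
rewrite -(LP_last H1); have [t ->] := LP_shape H1; exact: (mem_last a t).
Qed.

Lemma ne_ex m (u w : V m) : u != w -> exists k, u k != w k.
Proof.
move=> ne; apply/existsP; apply: contraR ne; rewrite negb_exists => /forallP H.
by apply/eqP/ffunP => k; apply/eqP; move: (H k); rewrite negbK.
Qed.

Lemma ext_set (T : finType) k : forall S : {set T}, #|S| + k <= #|T| ->
  exists S' : {set T}, (S \subset S') && (#|S'| == #|S| + k).
Proof.
elim: k => [|k IH] S hS; first by exists S; rewrite addn0 subxx eqxx.
have [z zS] : exists z, z \notin S.
  apply/existsP; apply: contraTT hS; rewrite negb_exists => /forallP H.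
  have -> : S = setT by apply/setP => z; rewrite inE; move: (H z); rewrite negbK.
  by rewrite cardsT -ltnNge; lia.
have h1 : #|z |: S| + k <= #|T| by rewrite cardsU1 zS; lia.
have [S' /andP [sub /eqP cS']] := IH _ h1.
exists S'; rewrite cS' cardsU1 zS add1n addnS addSn eqxx andbT.
by apply: subset_trans sub; apply/subsetP => u uS; rewrite !inE uS orbT.
Qed.

Lemma pick3 n (k1 k2 k3 : 'I_n.+1) : 2 < n.+1 ->
  exists g0 g1 g2 : 'I_n.+1, uniq [:: g0; g1; g2] /\ {subset [:: k1; k2; k3] <= [:: g0; g1; g2]}.
Proof.
move=> hn; set S := [set k1; k2; k3].
have cS : #|S| <= 3.
  by rewrite /S -setUA cardsU1 cards2; case: (k1 \notin _); case: (k2 != k3).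
have hS : #|S| + (3 - #|S|) <= #|'I_n.+1| by rewrite card_ord; lia.
have [S' /andP [sub /eqP cS']] := @ext_set _ (3 - #|S|) S hS.
have c3 : size (enum S') = 3 by rewrite -cardE cS'; lia.
case E: (enum S') c3 => [|g0 [|g1 [|g2 [|]]]] // _.
exists g0, g1, g2; split; first by rewrite -E enum_uniq.
move=> u hu; rewrite -E mem_enum; apply: (subsetP sub).
by move: hu; rewrite /S !inE => /or3P [] ->; rewrite ?orbT.
Qed.

Lemma dff_r n (g0 g1 g2 : 'I_n.+1) (A B X Y : V n.+1) (u' w' : nat -> nat) (u w : V n.+1) :
  R ords3 (hh g0 g1 g2) (FF g0 g1 g2 A B X Y) u' u -> R ords3 (hh g0 g1 g2) (FF g0 g1 g2 A B X Y) w' w ->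
  (exists2 k, k \in [:: g0; g1; g2] & u k != w k) -> dff ords3 u' w'.
Proof.
move=> Ru Rw [k kin ne]; apply/hasP.
have [t tin ht] : exists2 t, t \in ords3 & hh g0 g1 g2 t = k.
  by move: kin; rewrite !inE => /or3P [] /eqP ->; [exists 0|exists 1|exists 2].
by exists t => //; rewrite Ru // Rw // (inj_eq (@FF_inj _ _ _ _ _ _ _ _ t)) ht.
Qed.

Lemma sep3 n (A B X Y : V n.+1) (u1 w1 u2 w2 u3 w3 : V n.+1) : 2 < n.+1 ->
  u1 != w1 -> u2 != w2 -> u3 != w3 ->
  exists g0 g1 g2 : 'I_n.+1, [/\ uniq [:: g0; g1; g2],
    exists2 k, k \in [:: g0; g1; g2] & u1 k != w1 k,
    exists2 k, k \in [:: g0; g1; g2] & u2 k != w2 k &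
    exists2 k, k \in [:: g0; g1; g2] & u3 k != w3 k].
Proof.
move=> hn /ne_ex [k1 h1] /ne_ex [k2 h2] /ne_ex [k3 h3].
have [g0 [g1 [g2 [gu sub]]]] := pick3 k1 k2 k3 hn.
exists g0, g1, g2; split => //; [exists k1|exists k2|exists k3] => //; apply: sub; by rewrite !inE eqxx ?orbT.
Qed.

Lemma choose1' n (A B X Y : V n.+1) : 2 < n.+1 -> A != B -> A != X -> A != Y ->
  exists P Q : V n.+1, good1 (enum 'I_n.+1) A B X Y P Q.
Proof.
move=> hn ab ax ay; have [g0 [g1 [g2 [gu s1 s2 s3]]]] := sep3 A B X Y hn ab ax ay.
apply: (choose1 gu); apply/and3P; split; apply: dff_r; by [apply: RA|apply: RB|apply: RX|apply: RY|].
Qed.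

Lemma choose2' n (A B X Y : V n.+1) : 2 < n.+1 -> A != B -> A != X -> A != Y ->
  exists P Q : V n.+1, good2 (enum 'I_n.+1) A B X Y P Q.
Proof.
move=> hn ab ax ay; have [g0 [g1 [g2 [gu s1 s2 s3]]]] := sep3 A B X Y hn ab ax ay.
apply: (choose2 gu); apply/and3P; split; apply: dff_r; by [apply: RA|apply: RB|apply: RX|apply: RY|].
Qed.

Lemma choose3' n (A B X Y : V n.+1) : 2 < n.+1 -> A != X -> B != Y ->
  exists P Q V' S : V n.+1, good3 (enum 'I_n.+1) A B X Y P Q V' S /\ is_edge V' S Q.
Proof.
move=> hn ax b_y; have [g0 [g1 [g2 [gu s1 s2 s3]]]] := sep3 A B X Y hn ax b_y ax.
apply: (choose3 gu); apply/andP; split; apply: dff_r; by [apply: RA|apply: RB|apply: RX|apply: RY|].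
Qed.

Definition Hyp n := forall a b x y : V n.+1, config a b x y ->
     of_type (@phi1 n) a b x y \/ of_type (@phi2 n) a b x y \/
     of_type (@phi3 n) a b x y \/ of_type (@phi4 n) a b x y ->
     covered a b x y.

Lemma sc_ne n (A B X Y : V n.+1) : sc (enum 'I_n.+1) A B X Y ->
  (A != B) /\ (A != X) /\ (A != Y) /\ (B != X) /\ (B != Y) /\ (X != Y).
Proof. by case/andP=> /and5P [ab ax ay bx /andP [b_y xy]] _; do !split; apply: dff_ne. Qed.

Lemma sub_cov n (H : Hyp n) (A B X Y : V n.+1) : sc (enum 'I_n.+1) A B X Y ->
  exists s, LP A B s /\ forall v, (v \in s) = (v != X) && (v != Y).
Proof.
move=> h; have [C T] := sc_ok h; have := H _ _ _ _ C T.
by apply: covered_LP; case: (sc_ne h).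
Qed.

Lemma LPv n (c1 c2 c3 : 'I_3) (v : V n) : [&& c1 != c2, c2 != c3 & c1 != c3] ->
  LP (lay c1 v) (lay c3 v) [:: lay c1 v; lay c2 v; lay c3 v].
Proof. by move=> h; apply: LP1; apply: edge_vert. Qed.
Arguments LPv {n c1 c2 c3} v _.

Lemma LPm n c (u w : V n) s : LP u w s -> LP (lay c u) (lay c w) (map (lay c) s).
Proof. apply: LP_map; [exact: lay_inj|exact: edge_lay]. Qed.

Lemma mem_lay n c (w : V n) s : (lay c w \in map (lay c) s) = (w \in s).
Proof. by rewrite mem_map_lay lst_lay pre_lay eqxx. Qed.
Lemma mem_lay' n c c' (w : V n) s : c != c' -> (lay c w \in map (lay c') s) = false.
Proof. by rewrite mem_map_lay lst_lay => /negbTE ->. Qed.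

Lemma e01 : (c0 == c1) = false. Proof. by []. Qed.
Lemma e02 : (c0 == c2) = false. Proof. by []. Qed.
Lemma e12 : (c1 == c2) = false. Proof. by []. Qed.
Lemma e10 : (c1 == c0) = false. Proof. by []. Qed.
Lemma e20 : (c2 == c0) = false. Proof. by []. Qed.
Lemma e21 : (c2 == c1) = false. Proof. by []. Qed.
Lemma d012 : [&& c0 != c1, c1 != c2 & c0 != c2]. Proof. by []. Qed.
Lemma d210 : [&& c2 != c1, c1 != c0 & c2 != c0]. Proof. by []. Qed.
Lemma d021 : [&& c0 != c2, c2 != c1 & c0 != c1]. Proof. by []. Qed.
Lemma d120 : [&& c1 != c2, c2 != c0 & c1 != c0]. Proof. by []. Qed.
Lemma d201 : [&& c2 != c0, c0 != c1 & c2 != c1]. Proof. by []. Qed.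
Lemma d102 : [&& c1 != c0, c0 != c2 & c1 != c2]. Proof. by []. Qed.

Lemma lay_eqT n c (u w : V n) : (lay c u = lay c w) <-> (u = w).
Proof. by split => [/lay_inj|->]. Qed.

Lemma neqF (T : eqType) (u v : T) : u != v -> ((u == v) = false) * ((v == u) = false).
Proof. by move=> h; rewrite (negbTE h) eq_sym (negbTE h). Qed.

Ltac rwF := repeat match goal with | H : (?w == ?K) = false |- _ => rewrite ?H; clear H end.
Ltac leaf F := rewrite ?F ?eqxx ?e01 ?e02 ?e12 ?e10 ?e20 ?e21 /=; rwF; try done;
  repeat match goal with |- context [?u == ?v] => case: (u == v) end; try done.
Ltac bw w F K := let E := fresh "E" in case: (w =P K) => [E|/eqP/negbTE ?]; [rewrite ?E; leaf F; done|].
Ltac rwM := repeat match goal with H : forall v, (v \in ?s) = _ |- context [?z \in ?s] => rewrite H end.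
Ltac disj F K1 K2 K3 K4 K5 K6 K7 K8 := let c := fresh "c" in let w := fresh "w" in
  let v := fresh "v" in
  move=> v; rewrite -[v]lay_eta; move: (lst v) (pre v) => c w;
  rwM; rewrite ?inE ?lay_eq ?mem_map_lay ?lst_lay ?pre_lay; rwM; rewrite ?inE;
  case: (I3_cases c) => ->; rewrite ?e01 ?e02 ?e12 ?e10 ?e20 ?e21 ?eqxx /=;
  bw w F K1; bw w F K2; bw w F K3; bw w F K4; bw w F K5; bw w F K6; bw w F K7; bw w F K8; leaf F.

Lemma glue_k m (a mm b : V m) s1 s2 (G : Prop) : LP a mm s1 -> LP mm b s2 ->
  (forall v, v \in s1 -> v \in s2 -> v = mm) ->
  (LP a b (s1 ++ behead s2) -> (forall v, (v \in s1 ++ behead s2) = (v \in s1) || (v \in s2)) -> G) -> G.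
Proof. by move=> H1 H2 D K; case: (LP_glue2 H1 H2 D). Qed.

Lemma cov_t1 n (H : Hyp n) : 2 < n.+1 -> forall a b x y : V n.+2, t1 a b x y -> covered a b x y.
Proof.
move=> hn a b x y [la lx lb ly].
rewrite !inE !negb_or => /and3P [ab ax ay].
rewrite -(lay_eta a) -(lay_eta b) -(lay_eta x) -(lay_eta y) la lx lb ly.
move: (pre a) (pre b) (pre x) (pre y) ab ax ay => A B X Y ab ax ay.
have [P [Q /and3P [h2 h0 h1]]] := choose1' hn ab ax ay.
have [s2 [L2 M2]] := sub_cov H h2.
have [s0 [L0 M0]] := sub_cov H h0.
have [s1 [L1 M1]] := sub_cov H h1.
have [n1 [n2 [n3 [n4 [n5 n6]]]]] := sc_ne h2.
have [n7 [n8 [n9 [n10 [n11 n12]]]]] := sc_ne h0.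
have [n13 [n14 [n15 [n16 [n17 n18]]]]] := sc_ne h1.
have F := (neqF n1, neqF n2, neqF n3, neqF n4, neqF n5, neqF n6, neqF n7, neqF n8, neqF n9,
  neqF n10, neqF n11, neqF n12, neqF n13, neqF n14, neqF n15, neqF n16, neqF n17, neqF n18).
apply: (glue_k (LPv Q d021) (LPm c1 L1)); first by disj F A B X Y P Q P Q.
move=> G5 GM5.
apply: (glue_k (LPm c0 L0) G5); first by disj F A B X Y P Q P Q.
move=> G4 GM4.
apply: (glue_k (LPv P d210) G4); first by disj F A B X Y P Q P Q.
move=> G3 GM3.
apply: (glue_k (LPm c2 L2) G3); first by disj F A B X Y P Q P Q.
move=> G2 GM2.
apply: (glue_k (LPv A d012) G2); first by disj F A B X Y P Q P Q.
move=> G1 GM1.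
exists ([:: lay c0 A; lay c1 A; lay c2 A] ++ behead ([seq lay c2 i | i <- s2] ++ behead ([:: lay c2 P; lay c1 P; lay c0 P] ++
  behead ([seq lay c0 i | i <- s0] ++ behead ([:: lay c0 Q; lay c2 Q; lay c1 Q] ++ behead [seq lay c1 i | i <- s1]))))).
split; first exact: LP_loose G1.
by disj F A B X Y P Q P Q.
Qed.

Lemma cov_t2 n (H : Hyp n) : 2 < n.+1 -> forall a b x y : V n.+2, t2 a b x y -> covered a b x y.
Proof.
move=> hn a b x y [la lb lx ly].
rewrite !inE !negb_or => /and3P [ab ax ay].
rewrite -(lay_eta a) -(lay_eta b) -(lay_eta x) -(lay_eta y) la lx lb ly.
move: (pre a) (pre b) (pre x) (pre y) ab ax ay => A B X Y ab ax ay.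
have [P [R /and3P [h2 h1 h0]]] := choose2' hn ab ax ay.
have [s2 [L2 M2]] := sub_cov H h2.
have [s1 [L1 M1]] := sub_cov H h1.
have [s0 [L0 M0]] := sub_cov H h0.
have [n1 [n2 [n3 [n4 [n5 n6]]]]] := sc_ne h2.
have [n7 [n8 [n9 [n10 [n11 n12]]]]] := sc_ne h1.
have [n13 [n14 [n15 [n16 [n17 n18]]]]] := sc_ne h0.
have F := (neqF n1, neqF n2, neqF n3, neqF n4, neqF n5, neqF n6, neqF n7, neqF n8, neqF n9,
  neqF n10, neqF n11, neqF n12, neqF n13, neqF n14, neqF n15, neqF n16, neqF n17, neqF n18).
apply: (glue_k (LPv R d120) (LPm c0 L0)); first by disj F A B X Y P R P R.
move=> G5 GM5.
apply: (glue_k (LPm c1 L1) G5); first by disj F A B X Y P R P R.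
move=> G4 GM4.
apply: (glue_k (LPv P d201) G4); first by disj F A B X Y P R P R.
move=> G3 GM3.
apply: (glue_k (LPm c2 L2) G3); first by disj F A B X Y P R P R.
move=> G2 GM2.
apply: (glue_k (LPv A d012) G2); first by disj F A B X Y P R P R.
move=> G1 GM1.
eexists; split; first exact: LP_loose G1.
by disj F A B X Y P R P R.
Qed.

Lemma cov_t3 n (H : Hyp n) : 2 < n.+1 -> forall a b x y : V n.+2, t3 a b x y -> config a b x y ->
  covered a b x y.
Proof.
move=> hn a b x y [la lx lb ly] [[_ ax _] [_ b_y _]].
move: ax b_y; rewrite -(lay_eta a) -(lay_eta b) -(lay_eta x) -(lay_eta y) la lx lb ly !lay_eq !eqxx /=.
move: (pre a) (pre b) (pre x) (pre y) => A B X Y ax b_y.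
have [P [R [V' [S [/and3P [h0 h1 h2] E]]]]] := choose3' hn ax b_y.
have [s0 [L0 M0]] := sub_cov H h0.
have [s1 [L1 M1]] := sub_cov H h1.
have [s2 [L2 M2]] := sub_cov H h2.
have [n1 [n2 [n3 [n4 [n5 n6]]]]] := sc_ne h0.
have [n7 [n8 [n9 [n10 [n11 n12]]]]] := sc_ne h1.
have [n13 [n14 [n15 [n16 [n17 n18]]]]] := sc_ne h2.
have F := (neqF n1, neqF n2, neqF n3, neqF n4, neqF n5, neqF n6, neqF n7, neqF n8, neqF n9,
  neqF n10, neqF n11, neqF n12, neqF n13, neqF n14, neqF n15, neqF n16, neqF n17, neqF n18).
have [VS SR VR] := edge_ne E.
have F' := (F, neqF VS, neqF SR, neqF VR).
apply: (glue_k L2 (LP1 E)).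
  move=> v; rewrite M2 !inE => /andP [vS vR] /or3P [/eqP //|/eqP Ev|/eqP Ev].
    by rewrite Ev eqxx in vS.
  by rewrite Ev eqxx in vR.
move=> K2 KM2.
apply: (glue_k (LPv R d201) (LPm c1 L1)); first by disj F' A B X Y P R V' S.
move=> G4 GM4.
apply: (glue_k (LPm c2 K2) G4); first by disj F' A B X Y P R V' S.
move=> G3 GM3.
apply: (glue_k (LPv P d012) G3); first by disj F' A B X Y P R V' S.
move=> G2 GM2.
apply: (glue_k (LPm c0 L0) G2); first by disj F' A B X Y P R V' S.
move=> G1 GM1.
eexists; split; first exact: LP_loose G1.
by disj F' A B X Y P R V' S.
Qed.

Lemma config_sym m (sg : {perm 'I_m}) p (a b x y : V m) : config a b x y ->
  config (sym sg p a) (sym sg p b) (sym sg p x) (sym sg p y).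
Proof. by case=> [[h1 h2 h3] [h4 h5 h6]]; split; split; rewrite (inj_eq (@sym_inj _ sg p)). Qed.

Lemma config_swap m (a b x y : V m) : config a b x y -> config a b y x.
Proof. by case=> [[h1 h2 h3] [h4 h5 h6]]; split; split; rewrite // eq_sym. Qed.

Lemma lift_type m (P : V m -> V m -> V m -> V m -> Prop) :
  (forall a b x y, config a b x y -> P a b x y -> covered a b x y) ->
  forall a b x y, config a b x y -> of_type P a b x y -> covered a b x y.
Proof.
move=> HP a b x y C [sg [p [H|H]]].
  apply: (covered_sym (sg := sg) (p := p)); first by case: C => [[]].
  exact: HP (config_sym _ _ C) H.
apply: covered_swap; apply: (covered_sym (sg := sg) (p := p)); first by case: C => [[]].
exact: HP (config_sym _ _ (config_swap C)) H.
Qed.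

Definition swp m : {ffun 'I_m.+1 -> {perm 'I_3}} := [ffun i => if i == ord_max then mkp c1 c0 else 1%g].

Lemma swp_lst m (v : V m.+1) : lst (sym 1%g (swp m) v) = mkp c1 c0 (lst v).
Proof. by rewrite /lst !ffunE eqxx perm1. Qed.

Lemma swp_pre m (v : V m.+1) : pre (sym 1%g (swp m) v) = pre v.
Proof.
apply/ffunP => i; rewrite !ffunE perm1.
have -> : (widen_ord (leqnSn m) i == ord_max) = false.
  by apply/negbTE; rewrite -val_eqE /= neq_ltn ltn_ord.
by rewrite perm1.
Qed.

Lemma cov_t4 n (H : Hyp n) : 2 < n.+1 -> forall a b x y : V n.+2, config a b x y -> t4 a b x y -> covered a b x y.
Proof.
move=> hn a b x y C [la lb lx ly hb].
have ab : a != b by case: C => [[]].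
apply: covered_rev; first by rewrite eq_sym.
apply: (covered_sym (sg := 1%g) (p := swp n.+1)); first by rewrite eq_sym.
apply: (cov_t1 H hn); split; rewrite ?swp_lst ?la ?lb ?lx ?ly ?mkp_u ?mkp_v ?mkp_w //.
by rewrite !swp_pre.
Qed.

Lemma cov_t5 n (H : Hyp n) : 2 < n.+1 -> forall a b x y : V n.+2, config a b x y -> t5 a b x y -> covered a b x y.
Proof.
move=> hn a b x y C [la lb lx ly hb].
have ab : a != b by case: C => [[]].
apply: covered_rev; first by rewrite eq_sym.
by apply: (cov_t2 H hn); split.
Qed.

Theorem lemma1p5 (n : nat) (hn : 3 <= n) :
  (forall a b x y : V n.+1, config a b x y ->
     of_type (@phi1 n) a b x y \/ of_type (@phi2 n) a b x y \/
     of_type (@phi3 n) a b x y \/ of_type (@phi4 n) a b x y ->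
     covered a b x y) ->
  forall a b x y : V n.+2, config a b x y ->
    of_type (@t1 n.+1) a b x y \/ of_type (@t2 n.+1) a b x y \/
    of_type (@t3 n.+1) a b x y \/ of_type (@t4 n.+1) a b x y \/
    of_type (@t5 n.+1) a b x y ->
    covered a b x y.
Proof.
move=> H a b x y C; have hn' : 2 < n.+1 by lia.
case=> [T|[T|[T|[T|T]]]]; apply: (lift_type _ C T) => a' b' x' y' C'.
- exact: cov_t1 H hn' a' b' x' y'.
- exact: cov_t2 H hn' a' b' x' y'.
- by move=> T'; apply: cov_t3 H hn' a' b' x' y' T' C'.
- exact: cov_t4 H hn' a' b' x' y' C'.
- exact: cov_t5 H hn' a' b' x' y' C'.
Qed.
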